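(* Let $D$ be a digraph and let $H$ be a source-sink-split of $D$. Then $\operatorname{bw}(u(H))=\operatorname{dbw}(D)$.
   Context: All digraphs are finite and loopless, without parallel edges. A source has no incoming edges, a sink no outgoing edges. Two distinct vertices are source/sink-identifiable if both are sources or both are sinks; identifying them replaces them by one new vertex $\gamma$ with $N^-(\gamma)=N^-(x)\cup N^-(y)$ and $N^+(\gamma)=N^+(x)\cup N^+(y)$. A digraph $H$ is a source-sink-split of $D$ if every source and every sink of $H$ has degree exactly $1$ and $D$ is obtained from $H$ by a finite sequence of identifications of source/sink-identifiable pairs. $u(H)$ is the undirected multigraph with one edge $xy$ per directed edge $\vec{xy}$. Branch-width of an undirected multigraph $G$: minimum over $(T,\tau)$ ($T$ a tree of maximum degree at most three, $\tau$ a bijection from leaves onto $E(G)$) of the maximum over tree edges $t$ of the number of vertices incident with an edge of $\tau(Y)$ and an edge of $E(G)\setminus\tau(Y)$, $Y$ the leaves on one side of $T-t$ (0 if no tree edges). Directed branch-width: same with $\beta$ onto $E(D)$ and order $|S^V_{\beta(Y)}\cup S^V_{E(D)\setminus\beta(Y)}|$, where $S^V_X=\{y: \exists x,z,\ \vec{xy}\in E(D)\setminus X,\ \vec{yz}\in X\}$. *)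

(* Defs.v *)
From mathcomp Require Import all_boot finmap.
Set Implicit Arguments. Unset Strict Implicit. Unset Printing Implicit Defensive.
Local Open Scope fset_scope.

(* Using a set of pairs
   excludes parallel edges (two edges with the same tail and head). *)
Record digraph := Digraph { dv : {fset nat}; de : {fset (nat * nat)} }.

Definition wf_digraph (D : digraph) : Prop :=
  forall e, e \in de D -> [/\ e.1 \in dv D, e.2 \in dv D & e.1 != e.2].

Definition is_source (D : digraph) (v : nat) : bool :=
  (v \in dv D) && ~~ [exists e : de D, (val e).2 == v].
Definition is_sink (D : digraph) (v : nat) : bool :=
  (v \in dv D) && ~~ [exists e : de D, (val e).1 == v].

Definition degree (D : digraph) (v : nat) : nat :=
  #|` [fset e in de D | (e.1 == v) || (e.2 == v)] |.

(* Identification of a source/sink-identifiable pair x, y into a new vertex g: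
   N^-(g) = N^-(x) u N^-(y), N^+(g) = N^+(x) u N^+(y), all other vertices and
   edges unchanged. *)
Definition ident_map (x y g : nat) (v : nat) : nat :=
  if (v == x) || (v == y) then g else v.

Definition identify (D : digraph) (x y g : nat) : digraph :=
  Digraph (g |` (dv D `\ x `\ y))
          [fset (ident_map x y g e.1, ident_map x y g e.2) | e in de D].

Definition identifiable (D : digraph) (x y : nat) : bool :=
  [&& x \in dv D, y \in dv D, x != y &
      (is_source D x && is_source D y) || (is_sink D x && is_sink D y)].

Inductive obtained : digraph -> digraph -> Prop :=
| obtained_refl D : obtained D D
| obtained_step H x y g D :
    identifiable H x y -> g \notin (dv H `\ x `\ y) ->
    obtained (identify H x y g) D -> obtained H D.

Definition isomorphic (D1 D2 : digraph) : Prop :=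
  exists f : nat -> nat,
    [/\ {in dv D1 &, injective f},
        [fset f v | v in dv D1] = dv D2 &
        [fset (f e.1, f e.2) | e in de D1] = de D2].

Definition ss_split (H D : digraph) : Prop :=
  (forall v, (is_source H v || is_sink H v) -> degree H v = 1%N) /\
  exists D', obtained H D' /\ isomorphic D' D.

(* A (possibly empty) tree on vertex set 'I_n given by an adjacency relation *)
Definition acyclic_rel n (t : rel 'I_n) : Prop :=
  ~ exists (x : 'I_n) (p : seq 'I_n),
      [/\ (2 <= size p)%N, uniq (x :: p), path t x p & t (last x p) x].

Definition is_tree n (t : rel 'I_n) : Prop :=
  [/\ symmetric t, irreflexive t, (forall x y, connect t x y) & acyclic_rel t].

Definition tdeg n (t : rel 'I_n) (v : 'I_n) : nat := #|[set w | t v w]|.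

Definition is_leaf n (t : rel 'I_n) (v : 'I_n) : bool := (tdeg t v <= 1)%N.

Definition del_edge n (t : rel 'I_n) (a b : 'I_n) : rel 'I_n :=
  [rel u v | t u v && ~~ (((u == a) && (v == b)) || ((u == b) && (v == a)))].

Definition side n (t : rel 'I_n) (a b : 'I_n) : {set 'I_n} :=
  [set l | is_leaf t l & connect (del_edge t a b) a l].

Definition bdec_width_le (E : finType) (f : {set E} -> nat) (k : nat) : Prop :=
  exists (n : nat) (t : rel 'I_n) (tau : 'I_n -> E),
    [/\ is_tree t,
        (forall v, tdeg t v <= 3)%N,
        {in [pred l | is_leaf t l] &, injective tau},
        (forall e : E, exists2 l, is_leaf t l & tau l = e) &
        (forall a b, t a b -> f (tau @: side t a b) <= k)%N].

Definition is_bwidth (E : finType) (f : {set E} -> nat) (k : nat) : Prop :=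
  bdec_width_le f k /\ (forall k', bdec_width_le f k' -> (k <= k')%N).

(* Undirected multigraph u(H): one edge xy per directed edge (x,y) of H, so
   its edge set is indexed by de H.  Order of X = number of vertices incident
   with an edge of X and an edge outside X. *)
Definition incident (D : digraph) (v : nat) (e : de D) : bool :=
  ((val e).1 == v) || ((val e).2 == v).

Definition u_order (H : digraph) (X : {set de H}) : nat :=
  #|` [fset v in dv H | [exists e in X, incident v e] &&
                         [exists e in ~: X, incident v e]] |.

Definition SV (D : digraph) (X : {set de D}) : {fset nat} :=
  [fset y in dv D | [exists e in ~: X, (val e).2 == y] &&
                    [exists e in X, (val e).1 == y]].

Definition d_order (D : digraph) (X : {set de D}) : nat :=
  #|` SV X `|` SV (~: X) |.

Definition bw_u (H : digraph) (k : nat) : Prop := is_bwidth (@u_order H) k.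
Definition dbw (D : digraph) (k : nat) : Prop := is_bwidth (@d_order D) k.

(* Main.v *)
Require Import Defs.
From mathcomp Require Import all_boot finmap.
From Stdlib Require Import FunctionalExtensionality Classical.
Set Implicit Arguments. Unset Strict Implicit. Unset Printing Implicit Defensive.

Section Gen.
Lemma hom_connect (T1 T2 : finType) (e1 : rel T1) (e2 : rel T2) (g : T1 -> T2) :
  (forall u w, e1 u w -> (g u == g w) || e2 (g u) (g w)) ->
  forall u w, connect e1 u w -> connect e2 (g u) (g w).
Proof.
move=> H u w /connectP [p pth ->]; elim: p u pth => [|w' p IH] u /=.
  by move=> _; exact: connect0.
case/andP=> euw pth; apply: connect_trans (IH _ pth).
by case/orP: (H _ _ euw) => [/eqP->|]; [exact: connect0|exact: connect1].
Qed.

Lemma emb_connect (T1 T2 : finType) (e1 : rel T1) (e2 : rel T2) (g : T1 -> T2) :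
  (forall u w, e1 u w -> e2 (g u) (g w)) ->
  forall u w, connect e1 u w -> connect e2 (g u) (g w).
Proof. by move=> H; apply: hom_connect => u w /H ->; rewrite orbT. Qed.

Lemma no_out_connect (T : finType) (e : rel T) z y :
  (forall w, ~~ e z w) -> connect e z y -> y = z.
Proof.
move=> H /connectP [[|w p] /= pth ->] //.
by case/andP: pth => ezw; rewrite (negbTE (H w)) in ezw.
Qed.

Lemma no_in_connect (T : finType) (e : rel T) x z :
  (forall u, ~~ e u z) -> connect e x z -> x = z.
Proof.
move=> H /connectP [p]; elim/last_ind: p => [|p w _] //=.
rewrite rcons_path last_rcons => /andP [_ ew] Ez; subst z.
by rewrite (negbTE (H _)) in ew.
Qed.

Lemma leaf_nb n (t : rel 'I_n) v a b : is_leaf t v -> t v a -> t v b -> a = b.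
Proof.
rewrite /is_leaf /tdeg => /card_le1P H ta tb.
have ain : a \in [set w | t v w] by rewrite inE.
by have := H _ ain b; rewrite !inE tb => /esym /eqP.
Qed.
End Gen.

Section Attach.
Variables (n : nat) (t : rel 'I_n) (m : 'I_n) (l : 'I_n.+1).

Definition att : rel 'I_n.+1 := fun u w =>
  match unlift l u, unlift l w with
  | Some x, Some y => t x y
  | Some x, None => x == m
  | None, Some y => y == m
  | None, None => false
  end.

Definition proj (u : 'I_n.+1) : 'I_n := odflt m (unlift l u).

Lemma att_ll x y : att (lift l x) (lift l y) = t x y.
Proof. by rewrite /att !liftK. Qed.
Lemma att_lL x : att (lift l x) l = (x == m).
Proof. by rewrite /att liftK unlift_none. Qed.
Lemma att_Ll y : att l (lift l y) = (y == m).
Proof. by rewrite /att liftK unlift_none. Qed.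
Lemma att_LL : att l l = false.
Proof. by rewrite /att unlift_none. Qed.
Lemma proj_lift x : proj (lift l x) = x.
Proof. by rewrite /proj liftK. Qed.
Lemma proj_L : proj l = m.
Proof. by rewrite /proj unlift_none. Qed.

Lemma att_uL u : att u l -> u = lift l m.
Proof. by case: (unliftP l u) => [x ->|->]; rewrite ?att_LL // att_lL => /eqP->. Qed.
Lemma att_Lu u : att l u -> u = lift l m.
Proof. by case: (unliftP l u) => [x ->|->]; rewrite ?att_LL // att_Ll => /eqP->. Qed.

Lemma att_hom u w : att u w -> (proj u == proj w) || t (proj u) (proj w).
Proof.
case: (unliftP l u) => [x ->|->]; case: (unliftP l w) => [y ->|->];
  rewrite ?att_ll ?att_lL ?att_Ll ?att_LL ?proj_lift ?proj_L //.
- by move=> ->; rewrite orbT.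
- by move/eqP->; rewrite eqxx.
- by move/eqP->; rewrite eqxx.
Qed.

Lemma del_att_ll a b x y :
  del_edge att (lift l a) (lift l b) (lift l x) (lift l y) = del_edge t a b x y.
Proof. by rewrite /del_edge /= att_ll !(inj_eq (@lift_inj _ l)). Qed.

Lemma del_hom a b u w : del_edge att (lift l a) (lift l b) u w ->
  (proj u == proj w) || del_edge t a b (proj u) (proj w).
Proof.
case: (unliftP l u) => [x ->|->]; case: (unliftP l w) => [y ->|->].
- by rewrite del_att_ll !proj_lift => ->; rewrite orbT.
- by rewrite /del_edge /= att_lL proj_lift proj_L => /andP [/eqP-> _]; rewrite eqxx.
- by rewrite /del_edge /= att_Ll proj_lift proj_L => /andP [/eqP-> _]; rewrite eqxx.
- by rewrite /del_edge /= att_LL.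
Qed.

Lemma side1 a b x :
  connect (del_edge att (lift l a) (lift l b)) (lift l a) (lift l x) =
  connect (del_edge t a b) a x.
Proof.
apply/idP/idP.
  by move/(hom_connect (@del_hom a b)); rewrite !proj_lift.
by apply: emb_connect => u w; rewrite del_att_ll.
Qed.

Lemma side2 a b :
  connect (del_edge att (lift l a) (lift l b)) (lift l a) l =
  connect (del_edge t a b) a m.
Proof.
apply/idP/idP.
  by move/(hom_connect (@del_hom a b)); rewrite proj_lift proj_L.
rewrite -side1 => H; apply: connect_trans H _; apply: connect1.
rewrite /del_edge /= att_lL eqxx /=.
by rewrite ![l == lift _ _](negbTE (neq_lift _ _)) !andbF.
Qed.

Lemma side3 u : connect (del_edge att l (lift l m)) l u = (u == l).
Proof.
apply/idP/idP; last by move/eqP->; exact: connect0.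
move/no_out_connect => ->; rewrite ?eqxx // => w.
rewrite /del_edge /=; apply/negP => /andP [/att_Lu -> ].
by rewrite !eqxx.
Qed.

Lemma side4 x : (forall y, connect t m y) ->
  connect (del_edge att (lift l m) l) (lift l m) (lift l x).
Proof.
move=> C; apply: (emb_connect (g := lift l)) (C x) => u w tuw.
rewrite /del_edge /= att_ll tuw /=.
by rewrite ![lift _ _ == l]eq_sym ![l == lift _ _](negbTE (neq_lift _ _)) !andbF.
Qed.

Lemma side4' : connect (del_edge att (lift l m) l) (lift l m) l = false.
Proof.
apply/negP => /no_in_connect H.
have : lift l m = l.
  apply: H => u; rewrite /del_edge /=; apply/negP => /andP [/att_uL -> ].
  by rewrite !eqxx.
by move/eqP; rewrite eq_sym (negbTE (neq_lift _ _)).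
Qed.

End Attach.

Section AttTree.
Variables (n : nat) (t : rel 'I_n) (m : 'I_n) (l : 'I_n.+1).
Local Notation A := (att t m l).

Lemma path_att_lift x p : path A (lift l x) (map (lift l) p) = path t x p.
Proof. by elim: p x => [|y p IH] x //=; rewrite att_ll IH. Qed.

Lemma att_sym : symmetric t -> symmetric A.
Proof.
move=> S u w; case: (unliftP l u) => [x ->|->]; case: (unliftP l w) => [y ->|->];
by rewrite ?att_ll ?att_lL ?att_Ll ?att_LL.
Qed.

Lemma att_irr : irreflexive t -> irreflexive A.
Proof. by move=> I u; case: (unliftP l u) => [x ->|->]; rewrite ?att_ll ?att_LL. Qed.

Lemma att_tree : is_tree t -> is_tree A.
Proof.
case=> S I C Ac; split; [exact: att_sym | exact: att_irr | |].
  have Cm : forall u, connect A (lift l m) u.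
    move=> u; case: (unliftP l u) => [x ->|->].
      by apply: (emb_connect (g := lift l)) (C m x) => a b; rewrite att_ll.
    by apply: connect1; rewrite att_lL.
  move=> u w; apply: connect_trans (Cm w).
  by rewrite (sym_connect_sym (att_sym S)).
move=> [x [p [sz un pth lst]]].
have cyc : cycle A (x :: p) by rewrite /= rcons_path pth lst.
case: (boolP (l \in x :: p)) => [lin | lnin].
  case: (rot_to lin) => i q Er.
  have := rot_cycle i A (x :: p); rewrite Er cyc /= rcons_path => /andP [pq lq].
  have := rot_uniq i (x :: p); rewrite Er un => unq.
  have szq : (2 <= size q)%N.
    by have := size_rot i (x :: p); rewrite Er /= => [[->]].
  case: q Er pq lq szq unq => [|a q] //= Er /andP [la _] lq szq.
  case: q Er lq szq => [|b q] //= Er lq szq /andP [_ /andP [anin _]].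
  have E1 := att_Lu la.
  have E2 := att_uL lq.
  by move: anin; rewrite E1 -E2 (mem_last b q).
apply: Ac; exists (proj m l x), (map (proj m l) p).
have nl : forall u, u \in x :: p -> lift l (proj m l u) = u.
  move=> u uin; case: (unliftP l u) => [y ->|E]; first by rewrite proj_lift.
  by move: lnin; rewrite -E uin.
have Ep : map (lift l) (map (proj m l) p) = p.
  by rewrite -map_comp map_id_in // => u uin /=; apply: nl; rewrite inE uin orbT.
split.
- by rewrite size_map.
- rewrite -(map_inj_uniq (@lift_inj _ l)) /= nl ?mem_head // Ep //.
- by rewrite -path_att_lift nl ?mem_head // Ep.
- by rewrite -(att_ll t m l) -last_map Ep !nl ?mem_head ?mem_last.
Qed.

Lemma att_tree_inv : is_tree A -> is_tree t.
Proof.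
case=> S I C Ac; split.
- by move=> x y; rewrite -!(att_ll t m l) S.
- by move=> x; rewrite -(att_ll t m l) I.
- move=> x y; have := hom_connect (@att_hom _ t m l) (C (lift l x) (lift l y)).
  by rewrite !proj_lift.
move=> [x [p [sz un pth lst]]]; apply: Ac.
exists (lift l x), (map (lift l) p); split.
- by rewrite size_map.
- by rewrite -map_cons (map_inj_uniq (@lift_inj _ l)).
- by rewrite path_att_lift.
- by rewrite last_map att_ll.
Qed.

Lemma att_nbset x : [set w | A (lift l x) w] =
  lift l @: [set y | t x y] :|: (if x == m then [set l] else set0).
Proof.
apply/setP => w; rewrite !inE.
case: (unliftP l w) => [y ->|->].
  rewrite att_ll (mem_imset _ _ (@lift_inj _ l)) inE.
  case: (x == m); rewrite ?inE; last by rewrite orbF.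
  by rewrite eq_sym (negbTE (neq_lift _ _)) orbF.
rewrite att_lL; case: (x == m); rewrite ?inE ?eqxx ?orbT //.
rewrite orbF; apply/esym/imsetP => [[y _ /eqP]].
by rewrite (negbTE (neq_lift _ _)).
Qed.

Lemma tdeg_att_lift x : tdeg A (lift l x) = (tdeg t x + (x == m))%N.
Proof.
rewrite /tdeg att_nbset cardsU (card_imset _ (@lift_inj _ l)).
have -> : lift l @: [set y | t x y] :&: (if x == m then [set l] else set0) = set0.
  apply/setP => w; rewrite !inE; case: (x == m); rewrite ?inE ?andbF //.
  apply/negP => /andP [/imsetP [y _ ->]]; by rewrite eq_sym (negbTE (neq_lift _ _)).
by rewrite cards0 subn0; case: (x == m); rewrite ?cards1 ?cards0.
Qed.

Lemma tdeg_att_L : tdeg A l = 1%N.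
Proof.
rewrite /tdeg -(cards1 (lift l m)); congr (#|pred_of_set _|); apply/setP => w; rewrite !inE.
apply/idP/idP; first by move/att_Lu->.
by move/eqP->; rewrite att_Ll.
Qed.

End AttTree.

Definition i0_elim (T : Type) (v : 'I_0) : T :=
  False_rect T (match ltn_ord v in _ = b return if b then False else True with
                | erefl => I end).

Lemma bdec_empty (E : finType) (f : {set E} -> nat) k :
  (forall e : E, False) -> bdec_width_le f k.
Proof.
move=> He; have F : forall v : 'I_0, False := fun v => i0_elim _ v.
exists 0, (fun _ _ => false), (@i0_elim E).
split.
- split; try by move=> v; case: (F v).
  by case=> v [p _]; case: (F v).
- by move=> v; case: (F v).
- by move=> v; case: (F v).
- by move=> e; case: (He e).
- by move=> v; case: (F v).
Qed.

Lemma del_leaf n (T : rel 'I_n.+2) l : is_tree T -> is_leaf T l ->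
  exists m : 'I_n.+1, T = att (fun x y => T (lift l x) (lift l y)) m l.
Proof.
case=> S I C Ac lf.
have [w Tlw] : exists w, T l w.
  case/connectP: (C l (lift l ord0)) => [[|w p] /= pth E].
    by move: (neq_lift l ord0); rewrite E eqxx.
  by exists w; case/andP: pth.
case: (unliftP l w) Tlw => [m ->|->]; last by rewrite I.
move=> Tlm; exists m.
apply: functional_extensionality => u; apply: functional_extensionality => v.
case: (unliftP l u) => [x ->|->]; case: (unliftP l v) => [y ->|->].
- by rewrite att_ll.
- rewrite att_lL S; apply/idP/idP; first by move/(leaf_nb lf Tlm)/lift_inj->.
  by move/eqP->.
- rewrite att_Ll; apply/idP/idP; first by move/(leaf_nb lf Tlm)/lift_inj->.
  by move/eqP->.
- by rewrite att_LL I.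
Qed.

Section KDec.
Variables (E : finType) (f : {set E} -> nat) (k : nat).

Record kdec n (t : rel 'I_n) (tau : 'I_n -> E) (K : {set 'I_n}) : Prop := KDec {
  kd_tree : is_tree t;
  kd_deg : forall v, (tdeg t v <= 3)%N;
  kd_leaf : forall v, v \in K -> is_leaf t v;
  kd_inj : {in K &, injective tau};
  kd_cov : forall e, exists2 v, v \in K & tau v = e;
  kd_wd : forall a b, t a b -> (f (tau @: (side t a b :&: K)) <= k)%N }.

Lemma kdec_step n (T : rel 'I_n.+2) tau K l : kdec T tau K -> is_leaf T l -> l \notin K ->
  exists t' tau' K', @kdec n.+1 t' tau' K'.
Proof.
move=> kd lf lK; have [m ET] := del_leaf (kd_tree kd) lf.
set t' := (fun x y => T (lift l x) (lift l y)) in ET.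
rewrite ET in kd lf; case: kd => tr dg lv inj cov wd.
exists t', (fun x => tau (lift l x)), [set x | lift l x \in K]; split.
- exact: att_tree_inv tr.
- by move=> v; apply: leq_trans (dg (lift l v)); rewrite tdeg_att_lift leq_addr.
- move=> v; rewrite inE => /lv; rewrite /is_leaf tdeg_att_lift.
  by apply: leq_trans; rewrite leq_addr.
- by move=> x y; rewrite !inE => xK yK /(inj _ _ xK yK) /lift_inj.
- move=> e; case: (cov e) => v vK <-.
  case: (unliftP l v) vK => [x ->|->]; last by rewrite (negbTE lK).
  by move=> xK; exists x; rewrite ?inE.
- move=> a b tab; have := wd (lift l a) (lift l b); rewrite att_ll => /(_ tab).
  suff -> : side (att t' m l) (lift l a) (lift l b) :&: K =
            lift l @: (side t' a b :&: [set x | lift l x \in K]).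
    by rewrite -imset_comp.
  apply/setP => u; rewrite !inE.
  case: (unliftP l u) => [x ->|->].
    rewrite (mem_imset _ _ (@lift_inj _ l)) !inE side1.
    case: (boolP (lift l x \in K)) => xK; rewrite ?andbF //.
    have := lv _ xK; rewrite /is_leaf tdeg_att_lift => lx.
    by rewrite lx (leq_trans _ lx) ?leq_addr.
  rewrite (negbTE lK) andbF; apply/esym/negP => /imsetP [x _ /eqP].
  by rewrite (negbTE (neq_lift _ _)).
Qed.

Lemma kdec_bdec n t tau K : @kdec n t tau K -> bdec_width_le f k.
Proof.
elim: n t tau K => [|n IH] t tau K kd.
  apply: bdec_empty => e; case: (kd_cov kd e) => v.
  by move=> _ _; apply: (i0_elim _ v).
case: (boolP [forall v, is_leaf t v ==> (v \in K)]) => [/forallP allK|].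
  case: kd => tr dg lv inj cov wd; exists n.+1, t, tau; split => //.
  - by move=> x y lx ly; apply: inj; apply: (implyP (allK _)).
  - by move=> e; case: (cov e) => v /lv lf <-; exists v.
  - move=> a b tab; have := wd a b tab.
    suff -> : side t a b :&: K = side t a b by [].
    apply/setP => u; rewrite !inE; case: (boolP (is_leaf t u)) => //= lu.
    by rewrite (implyP (allK u) lu) andbT.
move/forallPn => [l]; rewrite negb_imply => /andP [lf lK].
case: (pickP (fun e : E => true)) => [e _|He]; last first.
  by apply: bdec_empty => e; have := He e.
case: n IH t tau K kd l lf lK => [|n] IH t tau K kd l lf lK.
  case: (kd_cov kd e) => v vK _.
  by move: lK; rewrite (ord1 l) -(ord1 v) vK.
have [t' [tau' [K' kd']]] := kdec_step kd lf lK.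
exact: IH kd'.
Qed.

End KDec.

Lemma transfer_b (E1 E2 : finType) (f1 : {set E1} -> nat) (f2 : {set E2} -> nat)
  (pi : E1 -> E2) (R : {set E1}) k :
  {in R &, injective pi} -> (forall y, exists2 x, x \in R & pi x = y) ->
  (forall X, f2 (pi @: (X :&: R)) <= f1 X)%N ->
  bdec_width_le f1 k -> bdec_width_le f2 k.
Proof.
move=> piI piS Hf [n [t [tau [tr dg inj cov wd]]]].
apply: (@kdec_bdec _ _ _ n t (fun v => pi (tau v)) [set v | is_leaf t v && (tau v \in R)]).
split => //.
- by move=> v; rewrite inE => /andP [].
- move=> u v; rewrite !inE => /andP [lu Ru] /andP [lv Rv] /(piI _ _ Ru Rv).
  exact: inj.
- move=> y; case: (piS y) => x xR <-; case: (cov x) => v lv Ev.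
  by exists v; rewrite ?inE ?lv ?Ev.
- move=> a b tab.
  suff -> : [set pi (tau v) | v in side t a b :&: [set v | is_leaf t v && (tau v \in R)]]
          = pi @: (tau @: side t a b :&: R) by apply: leq_trans (Hf _) (wd a b tab).
  have <- : tau @: (side t a b :&: [set v | is_leaf t v && (tau v \in R)]) = tau @: side t a b :&: R; last by rewrite -imset_comp.
  apply/setP => z; rewrite inE; apply/imsetP/andP.
    case=> v; rewrite inE => /andP [sv]; rewrite inE => /andP [_ Rv] ->.
    by split => //; apply: imset_f.
  case=> /imsetP [v sv ->] Rv; exists v => //.
  by rewrite !inE Rv andbT; move: sv; rewrite inE => /andP [-> ->].
Qed.

Variant c3_spec n (u : 'I_n.+2) : Prop :=
 | C3a v of u = lift ord_max (lift ord_max v)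
 | C3b of u = lift ord_max ord_max
 | C3c of u = ord_max.

Lemma c3P n (u : 'I_n.+2) : c3_spec u.
Proof.
case: (unliftP ord_max u) => [u1 ->|->]; last exact: C3c.
case: (unliftP ord_max u1) => [v ->|->]; [exact: C3a | exact: C3b].
Qed.

Section Split.
Variables (n : nat) (t : rel 'I_n) (lr : 'I_n).
Definition t1 := att t lr ord_max.
Definition t2 := att t1 (lift ord_max lr) ord_max.
Local Notation L1 := (lift (ord_max : 'I_n.+1)).
Local Notation L2 := (lift (ord_max : 'I_n.+2)).
Local Notation w1 := (L2 ord_max).
Local Notation w2 := (ord_max : 'I_n.+2).

Lemma t2_LL a b : t2 (L2 (L1 a)) (L2 (L1 b)) = t a b.
Proof. by rewrite /t2 att_ll /t1 att_ll. Qed.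
Lemma t2_Lw1 a : t2 (L2 (L1 a)) w1 = (a == lr).
Proof. by rewrite /t2 att_ll /t1 att_lL. Qed.
Lemma t2_w1L a : t2 w1 (L2 (L1 a)) = (a == lr).
Proof. by rewrite /t2 att_ll /t1 att_Ll. Qed.
Lemma t2_Lw2 a : t2 (L2 (L1 a)) w2 = (a == lr).
Proof. by rewrite /t2 att_lL (inj_eq (@lift_inj _ _)). Qed.
Lemma t2_w2L a : t2 w2 (L2 (L1 a)) = (a == lr).
Proof. by rewrite /t2 att_Ll (inj_eq (@lift_inj _ _)). Qed.
Lemma t2_w1w1 : t2 w1 w1 = false.
Proof. by rewrite /t2 att_ll /t1 att_LL. Qed.
Lemma t2_w1w2 : t2 w1 w2 = false.
Proof. by rewrite /t2 att_lL (negbTE (neq_lift _ _)). Qed.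
Lemma t2_w2w1 : t2 w2 w1 = false.
Proof. by rewrite /t2 att_Ll (negbTE (neq_lift _ _)). Qed.
Lemma t2_w2w2 : t2 w2 w2 = false.
Proof. by rewrite /t2 att_LL. Qed.

Lemma t2_tree : is_tree t -> is_tree t2.
Proof. by move=> tr; apply: att_tree; apply: att_tree. Qed.

Lemma tdeg_t2_L v : tdeg t2 (L2 (L1 v)) = (tdeg t v + (v == lr) + (v == lr))%N.
Proof. by rewrite /t2 tdeg_att_lift /t1 tdeg_att_lift (inj_eq (@lift_inj _ _)). Qed.
Lemma tdeg_t2_w1 : tdeg t2 w1 = 1%N.
Proof.
by rewrite /t2 tdeg_att_lift /t1 tdeg_att_L (negbTE (neq_lift _ _)).
Qed.
Lemma tdeg_t2_w2 : tdeg t2 w2 = 1%N.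
Proof. by rewrite /t2 tdeg_att_L. Qed.

Hypothesis lrleaf : is_leaf t lr.

Lemma leaf_t2_L v : is_leaf t2 (L2 (L1 v)) = is_leaf t v && (v != lr).
Proof.
rewrite /is_leaf tdeg_t2_L; case: (eqVneq v lr) => [->|ne]; last by rewrite !addn0 andbT.
by rewrite andbF /= !addn1 ltnS ltn0.
Qed.
Lemma leaf_t2_w1 : is_leaf t2 w1.
Proof. by rewrite /is_leaf tdeg_t2_w1. Qed.
Lemma leaf_t2_w2 : is_leaf t2 w2.
Proof. by rewrite /is_leaf tdeg_t2_w2. Qed.

Lemma deg_t2 : (forall v, tdeg t v <= 3)%N -> forall u, (tdeg t2 u <= 3)%N.
Proof.
move=> dg u; case: (c3P u) => [v ->|->|->]; rewrite ?tdeg_t2_w1 ?tdeg_t2_w2 //.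
rewrite tdeg_t2_L; case: (eqVneq v lr) => [->|]; last by rewrite !addn0.
by rewrite -addnA; move: lrleaf; rewrite /is_leaf -(leq_add2r 2).
Qed.

Lemma con_old a b v : connect (del_edge t2 (L2 (L1 a)) (L2 (L1 b))) (L2 (L1 a)) (L2 (L1 v))
  = connect (del_edge t a b) a v.
Proof. by rewrite /t2 side1 /t1 side1. Qed.
Lemma con_old_w1 a b : connect (del_edge t2 (L2 (L1 a)) (L2 (L1 b))) (L2 (L1 a)) w1
  = connect (del_edge t a b) a lr.
Proof. by rewrite /t2 side1 /t1 side2. Qed.
Lemma con_old_w2 a b : connect (del_edge t2 (L2 (L1 a)) (L2 (L1 b))) (L2 (L1 a)) w2
  = connect (del_edge t a b) a lr.
Proof. by rewrite /t2 side2 /t1 side1. Qed.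

Lemma con_w1 u : connect (del_edge t2 w1 (L2 (L1 lr))) w1 u = (u == w1).
Proof.
case: (c3P u) => [v ->|->|->].
- by rewrite /t2 side1 /t1 side3 (inj_eq (@lift_inj _ _)) eq_sym (negbTE (neq_lift _ _)).
- by rewrite eqxx; exact: connect0.
- rewrite /t2 side2 /t1 side3 (negbTE (neq_lift _ _)).
  by rewrite eq_sym (negbTE (neq_lift _ _)).
Qed.

Lemma con_w2 u : connect (del_edge t2 w2 (L2 (L1 lr))) w2 u = (u == w2).
Proof. by rewrite /t2 side3. Qed.

Hypothesis tr : is_tree t.

Lemma con_lr_w1 u : connect (del_edge t2 (L2 (L1 lr)) w1) (L2 (L1 lr)) u = (u != w1).
Proof.
case: tr => _ _ C _.
case: (c3P u) => [v ->|->|->].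
- have C' : forall y, connect t lr y by move=> y; apply: C.
  rewrite /t2 side1 /t1 (side4 _ _ C').
  by rewrite (inj_eq (@lift_inj _ _)) eq_sym (negbTE (neq_lift _ _)).
- by rewrite /t2 side1 /t1 side4' eqxx.
- by rewrite /t2 side2 (neq_lift _ _) connect0.
Qed.

Lemma con_lr_w2 u : connect (del_edge t2 (L2 (L1 lr)) w2) (L2 (L1 lr)) u = (u != w2).
Proof.
have C1 : forall y, connect t1 (lift ord_max lr) y.
  by case: (att_tree lr (ord_max : 'I_n.+1) tr) => _ _ C _ y; apply: C.
case: (unliftP ord_max u) => [v ->|->].
- by rewrite /t2 side4 // eq_sym (negbTE (neq_lift _ _)).
- by rewrite /t2 side4' eqxx.
Qed.

End Split.

Section PDec.
Variables (E : finType) (f : {set E} -> nat) (k : nat) (rep : E -> E) (R : {set E}).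
Hypothesis Hrep : forall x, rep x \in R.
Hypothesis Hrepid : forall x, x \in R -> rep x = x.
Hypothesis Hcls : forall r (X : {set E}), X \subset [set y | rep y == r] ->
  (f X <= k)%N /\ (f (~: X) <= k)%N.

Definition rho (S : {set E}) x := if x \in S then x else rep x.

Record pdec (S : {set E}) n (t : rel 'I_n) (tau : 'I_n -> E) : Prop := PDec {
  pd_tree : is_tree t;
  pd_deg : forall v, (tdeg t v <= 3)%N;
  pd_inj : {in [pred v | is_leaf t v] &, injective tau};
  pd_lab : forall v, is_leaf t v -> tau v \in S;
  pd_cov : forall s, s \in S -> exists2 v, is_leaf t v & tau v = s;
  pd_wd : forall a b, t a b -> (f (rho S @^-1: (tau @: side t a b)) <= k)%N }.

Lemma rhoS (S : {set E}) x : R \subset S -> rho S x \in S.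
Proof. by move=> RS; rewrite /rho; case: ifP => // _; apply: (subsetP RS). Qed.

Section Step.
Variables (S : {set E}) (n : nat) (t : rel 'I_n) (tau : 'I_n -> E) (x : E).
Hypotheses (RS : R \subset S) (pd : pdec S t tau) (xS : x \notin S).
Let r := rep x.
Let rS : r \in S. Proof. exact: (subsetP RS) (Hrep x). Qed.
Let S' := x |: S.

Local Notation L1 := (lift (ord_max : 'I_n.+1)).
Local Notation L2 := (lift (ord_max : 'I_n.+2)).
Local Notation w1 := (L2 ord_max).
Local Notation w2 := (ord_max : 'I_n.+2).

Definition tau2 lr0 (u : 'I_n.+2) : E :=
  if unlift ord_max u is Some u1 then
    (if unlift ord_max u1 is Some u0 then tau u0 else tau lr0) else x.

Lemma pdec_step : exists t' tau', @pdec S' n.+2 t' tau'.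
Proof.
case: pd => tr dg inj lab cov wd.
case: (cov r rS) => lr lrl taulr.
have T2L v : tau2 lr (L2 (L1 v)) = tau v by rewrite /tau2 !liftK.
have T2w1 : tau2 lr w1 = r by rewrite /tau2 liftK unlift_none.
have T2w2 : tau2 lr w2 = x by rewrite /tau2 unlift_none.
have rxS' : forall y, rho S' y \in S'.
  by move=> y; apply: rhoS; apply: subset_trans RS _; apply: subsetUr.
have rhox : forall y, (rho S' y == x) = (y == x).
  move=> y; rewrite /rho /S' in_setU1; case: (eqVneq y x) => [->|ne]; rewrite ?eqxx //=.
  case: ifP => _; first exact/negbTE.
  apply/negbTE; apply: contraNneq xS => <-; apply: (subsetP RS); exact: Hrep.
have rhoS'S : forall y, y != x -> rho S' y = rho S y.
  by move=> y ne; rewrite /rho /S' in_setU1 (negbTE ne).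
have clsr : forall z0, z0 \in [set r; x] -> rho S' @^-1: [set z0] \subset [set y | rep y == r].
  move=> z0 z0in; apply/subsetP => y; rewrite !inE => /eqP E0.
  move: z0in; rewrite !inE => /orP [] /eqP Ez0; rewrite {z0}Ez0 in E0.
    move: E0; rewrite /rho /S' in_setU1; case: (eqVneq y x) => [->|ne] /=.
      by move=> _; rewrite eqxx.
    case: ifP => [_ ->|_ ->]; first by rewrite Hrepid ?eqxx // /r Hrep.
    by rewrite eqxx.
  by move/eqP: E0; rewrite rhox => /eqP ->.
have compl : forall z0, rho S' @^-1: (S' :\ z0) = ~: (rho S' @^-1: [set z0]).
  by move=> z0; apply/setP => y; rewrite !inE -in_setU1 rxS' andbT.
exists (t2 t lr), (tau2 lr); split.
- exact: t2_tree.
- exact: deg_t2.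
- move=> u v; rewrite !inE => lu lv.
  have nlr : forall a, is_leaf (t2 t lr) (L2 (L1 a)) -> is_leaf t a /\ tau a != r.
    move=> a; rewrite leaf_t2_L // => /andP [la na]; split => //.
    by apply: contra na; rewrite -taulr => /eqP /(inj _ _ la lrl) ->.
  have xr : x != r by apply: contraNneq xS => ->.
  case: (c3P u) lu => [a ->|->|->] lu; case: (c3P v) lv => [b ->|->|->] lv;
    rewrite ?T2L ?T2w1 ?T2w2 => E0 //.
  + have [la _] := nlr _ lu; have [lb _] := nlr _ lv.
    by rewrite (inj _ _ la lb E0).
  + by have [_] := nlr _ lu; rewrite E0 eqxx.
  + by have [la _] := nlr _ lu; move: (lab _ la); rewrite E0 (negbTE xS).
  + by have [_] := nlr _ lv; rewrite E0 eqxx.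
  + by move: xr; rewrite E0 eqxx.
  + by have [la _] := nlr _ lv; move: (lab _ la); rewrite -E0 (negbTE xS).
  + by move: xr; rewrite E0 eqxx.
- move=> u; case: (c3P u) => [a ->|->|->]; rewrite ?T2L ?T2w1 ?T2w2 !inE ?eqxx //.
    by rewrite leaf_t2_L // => /andP [la _]; rewrite lab ?orbT.
  by move=> _; rewrite rS orbT.
- move=> s0; rewrite /S' in_setU1 => /orP [/eqP ->|s0S].
    by exists w2; rewrite ?leaf_t2_w2 ?T2w2.
  case: (cov s0 s0S) => v lv Ev; case: (eqVneq v lr) => [E1|ne].
    by exists w1; rewrite ?leaf_t2_w1 ?T2w1 // -Ev E1 taulr.
  by exists (L2 (L1 v)); rewrite ?leaf_t2_L ?lv ?ne ?T2L.
- have sidelr : forall a b, (lr \in side t a b) = connect (del_edge t a b) a lr.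
    by move=> a b; rewrite inE lrl.
  have memZ : forall a b z, (z \in tau2 lr @: side (t2 t lr) (L2 (L1 a)) (L2 (L1 b))) =
      (z \in tau @: side t a b) || ((z == x) && (r \in tau @: side t a b)).
    move=> a b z; apply/imsetP/idP.
      case=> u; rewrite inE; case: (c3P u) => [v ->|->|->].
      + rewrite leaf_t2_L // con_old => /andP [/andP [lv _] cv] ->.
        by rewrite T2L imset_f // inE lv.
      + rewrite con_old_w1 T2w1 => /andP [_ cv] ->.
        by rewrite -taulr imset_f // sidelr.
      + rewrite con_old_w2 T2w2 => /andP [_ cv] ->.
        by rewrite eqxx -taulr imset_f ?orbT // sidelr.
    case/orP => [/imsetP [v vin ->]|/andP [/eqP -> /imsetP [v vin Ev]]].
      move: (vin); rewrite inE => /andP [lv cv].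
      case: (eqVneq v lr) => [E1|ne].
        exists w1; last by rewrite T2w1 E1 taulr.
        by rewrite inE leaf_t2_w1 con_old_w1 -E1.
      exists (L2 (L1 v)); last by rewrite T2L.
      by rewrite inE leaf_t2_L // lv ne con_old.
    move: (vin); rewrite inE => /andP [lv cv].
    have E1 : v = lr by apply: inj; rewrite ?inE // -Ev taulr.
    exists w2; last by rewrite T2w2.
    by rewrite inE leaf_t2_w2 con_old_w2 -E1.
  have old : forall a b, t a b ->
      rho S' @^-1: (tau2 lr @: side (t2 t lr) (L2 (L1 a)) (L2 (L1 b))) =
      rho S @^-1: (tau @: side t a b).
    move=> a b tab; apply/setP => y; rewrite !inE memZ.
    have labS : forall z, z \in tau @: side t a b -> z \in S.
      by move=> z /imsetP [v]; rewrite inE => /andP [lv _] ->; apply: lab.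
    case: (eqVneq y x) => [->|ne].
      have -> : rho S' x = x by apply/eqP; rewrite rhox.
      have -> : rho S x = r by rewrite /rho (negbTE xS).
      rewrite eqxx /=; case: (boolP (x \in tau @: side t a b)) => //.
      by move/labS; rewrite (negbTE xS).
    have := rhox y; rewrite (negbTE ne) rhoS'S // => ->.
    by rewrite andFb orbF.
  have w1set : side (t2 t lr) w1 (L2 (L1 lr)) = [set w1].
    apply/setP => u; rewrite !inE con_w1; case: (eqVneq u w1) => [->|]; rewrite ?andbF //.
    by rewrite leaf_t2_w1.
  have w2set : side (t2 t lr) w2 (L2 (L1 lr)) = [set w2].
    apply/setP => u; rewrite !inE con_w2; case: (eqVneq u w2) => [->|]; rewrite ?andbF //.
    by rewrite leaf_t2_w2.
  have nlr : forall a, is_leaf (t2 t lr) (L2 (L1 a)) -> is_leaf t a /\ tau a != r.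
    move=> a; rewrite leaf_t2_L // => /andP [la na]; split => //.
    by apply: contra na; rewrite -taulr => /eqP /(inj _ _ la lrl) ->.
  have xr : x != r by apply: contraNneq xS => ->.
  have lr1set : tau2 lr @: side (t2 t lr) (L2 (L1 lr)) w1 = S' :\ r.
    apply/setP => z; rewrite !inE; apply/imsetP/idP.
      case=> u; rewrite inE con_lr_w1 //; case: (c3P u) => [v ->|->|->].
      + move=> /andP [/nlr [lv nv] _] ->; rewrite T2L nv /= lab ?orbT //.
      + by rewrite eqxx andbF.
      + by move=> _ ->; rewrite T2w2 xr eqxx.
    case/andP => zr /orP [/eqP ->|zS].
      exists w2; last by rewrite T2w2.
      by rewrite inE con_lr_w1 // leaf_t2_w2 (negbTE (neq_lift _ _)).
    case: (cov z zS) => v lv Ev; case: (eqVneq v lr) => [E1|ne].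
      by move: zr; rewrite -Ev E1 taulr eqxx.
    exists (L2 (L1 v)); last by rewrite T2L.
    rewrite inE con_lr_w1 // leaf_t2_L // lv ne /=.
    by rewrite (inj_eq (@lift_inj _ _)) eq_sym (negbTE (neq_lift _ _)).
  have lr2set : tau2 lr @: side (t2 t lr) (L2 (L1 lr)) w2 = S' :\ x.
    apply/setP => z; rewrite !inE; apply/imsetP/idP.
      case=> u; rewrite inE con_lr_w2 //; case: (c3P u) => [v ->|->|->].
      + move=> /andP [/nlr [lv nv] _] ->; rewrite T2L lab ?orbT ?andbT //.
        by apply: contraNneq xS => <-; apply: lab.
      + by move=> _ ->; rewrite T2w1 rS orbT andbT eq_sym.
      + by rewrite eqxx andbF.
    case/andP => zx /orP [/eqP E1|zS]; first by rewrite E1 eqxx in zx.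
    case: (cov z zS) => v lv Ev; case: (eqVneq v lr) => [E1|ne].
      exists w1; last by rewrite T2w1 -Ev E1 taulr.
      by rewrite inE con_lr_w2 // leaf_t2_w1 eq_sym (negbTE (neq_lift _ _)).
    exists (L2 (L1 v)); last by rewrite T2L.
    by rewrite inE con_lr_w2 // leaf_t2_L // lv ne /= eq_sym (negbTE (neq_lift _ _)).
  have Cr : forall Z, Z \in [:: [set r]; S' :\ r] ->
      (f (rho S' @^-1: Z) <= k)%N.
    move=> Z; rewrite !inE => /orP [] /eqP ->.
      by apply: (Hcls (clsr _ _)).1; rewrite !inE eqxx.
    by rewrite compl; apply: (Hcls (clsr _ _)).2; rewrite !inE eqxx.
  have Cx : forall Z, Z \in [:: [set x]; S' :\ x] ->
      (f (rho S' @^-1: Z) <= k)%N.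
    move=> Z; rewrite !inE => /orP [] /eqP ->.
      by apply: (Hcls (clsr _ _)).1; rewrite !inE eqxx orbT.
    by rewrite compl; apply: (Hcls (clsr _ _)).2; rewrite !inE eqxx orbT.
  move=> u w; case: (c3P u) => [a ->|->|->]; case: (c3P w) => [b ->|->|->];
    rewrite ?t2_LL ?t2_Lw1 ?t2_w1L ?t2_Lw2 ?t2_w2L ?t2_w1w1 ?t2_w1w2 ?t2_w2w1 ?t2_w2w2 //.
  + by move=> tab; rewrite old //; apply: wd.
  + by move/eqP ->; rewrite lr1set; apply: Cr; rewrite !inE eqxx orbT.
  + by move/eqP ->; rewrite lr2set; apply: Cx; rewrite !inE eqxx orbT.
  + by move/eqP ->; rewrite w1set imset_set1 T2w1; apply: Cr; rewrite !inE eqxx.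
  + by move/eqP ->; rewrite w2set imset_set1 T2w2; apply: Cx; rewrite !inE eqxx.
Qed.
End Step.
End PDec.

Section Grow.
Variables (E : finType) (f : {set E} -> nat) (k : nat) (rep : E -> E) (R : {set E}).
Hypothesis Hrep : forall x, rep x \in R.
Hypothesis Hrepid : forall x, x \in R -> rep x = x.
Hypothesis Hcls : forall r (X : {set E}), X \subset [set y | rep y == r] ->
  (f X <= k)%N /\ (f (~: X) <= k)%N.

Lemma grow (S : {set E}) n (t : rel 'I_n) (tau : 'I_n -> E) : R \subset S -> @pdec E f k rep S n t tau ->
  bdec_width_le f k.
Proof.
have [m] := ubnP #|~: S|; elim: m S n t tau => // m IH S n t tau lt RS pd.
case: (set_0Vmem (~: S)) => [S0|[x xS]].
  have ST : S = setT by apply/setP => y; rewrite inE; move/setP: S0 => /(_ y); rewrite !inE => /negbFE.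
  subst S; case: pd => tr dg inj lab cov wd.
  exists n, t, tau; split => //.
  - by move=> e; apply: cov; rewrite inE.
  - move=> a b tab; have := wd a b tab.
    suff -> : rho rep [set: E] @^-1: (tau @: side t a b) = tau @: side t a b by [].
    by apply/setP => y; rewrite !inE /rho inE.
rewrite inE in xS.
have [t' [tau' pd']] := pdec_step Hrep Hrepid Hcls RS pd xS.
apply: IH pd'; last by apply: subset_trans RS _; apply: subsetUr.
rewrite -ltnS; apply: leq_trans lt; rewrite ltnS.
rewrite -(cardsID [set x] (~: S)) setCU.
have -> : ~: [set x] :&: ~: S = ~: S :\ x by rewrite setDE setIC.
rewrite -[X in (X < _)%N]add0n ltn_add2r.
by rewrite card_gt0; apply/set0Pn; exists x; rewrite !inE eqxx xS.
Qed.
End Grow.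

Lemma bdec_exists (E : finType) (f : {set E} -> nat) : exists k, bdec_width_le f k.
Proof.
case: (pickP (fun e : E => true)) => [e0 _|He]; last first.
  by exists 0; apply: bdec_empty => e; have := He e.
exists (\max_(X : {set E}) f X).
have H1 : forall x : E, (fun _ => e0) x \in [set e0] by move=> _; rewrite inE.
have H2 : forall x, x \in [set e0] -> (fun _ => e0) x = x by move=> x; rewrite inE => /eqP.
have H3 : forall r (X : {set E}), X \subset [set y | (fun _ => e0) y == r] ->
   (f X <= \max_(X : {set E}) f X)%N /\ (f (~: X) <= \max_(X : {set E}) f X)%N.
  by move=> r X _; split; apply: leq_bigmax.
apply: (@grow E f _ (fun _ => e0) [set e0] H1 H2 H3 [set e0] 1 (fun _ _ => false) (fun _ => e0)) => //.
have o1 : forall u v : 'I_1, u = v by move=> u v; rewrite (ord1 u) (ord1 v).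
split => //.
- split => //.
  all: try (by move=> u v; rewrite (o1 u v); exact: connect0).
  by case=> u [[|w p] []].
- by move=> v; rewrite /tdeg; apply: leq_trans (max_card _) _; rewrite card_ord.
all: try (by move=> u v _ _ _; apply: o1).
all: try (by move=> v _; rewrite inE).
all: try (by move=> v; rewrite inE).
move=> s; rewrite inE => /eqP ->; exists ord0 => //.
  by rewrite /is_leaf /tdeg; apply: leq_trans (max_card _) _; rewrite card_ord.
Qed.

Lemma bdec_single (E : finType) (f : {set E} -> nat) k : f setT = 0 ->
  bdec_width_le f k -> forall e, (f [set e] <= k)%N.
Proof.
move=> fT [n [t [tau [tr dg inj cov wd]]]] e.
case: (cov e) => l ll <-.
case: (pickP (fun m => t l m)) => [m tlm|none].
  rewrite -imset_set1; suff -> : [set l] = side t l m by apply: wd.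
  apply/esym/setP => u; rewrite !inE; apply/andP/eqP => [[_ /no_out_connect -> //]|->].
    move=> w; rewrite /del_edge /=; apply/negP => /andP [tlw].
    by rewrite (leaf_nb ll tlw tlm) !eqxx.
  by split => //; exact: connect0.
have alll : forall u, u = l.
  move=> u; case: tr => _ _ C _; apply: no_out_connect (C l u) => w.
  by rewrite none.
suff -> : [set tau l] = setT by rewrite fT.
apply/setP => e'; rewrite !inE; case: (cov e') => l' _ <-.
by rewrite (alll l') eqxx.
Qed.

Lemma transfer_a (E1 E2 : finType) (f1 : {set E1} -> nat) (f2 : {set E2} -> nat)
  (pi : E1 -> E2) k :
  (forall y, exists x, pi x = y) ->
  (forall Y : {set E2}, f1 (pi @^-1: Y) <= f2 Y)%N ->
  (forall X : {set E1}, f1 (~: X) = f1 X) ->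
  (forall y (X : {set E1}), X \subset pi @^-1: [set y] -> f1 X <= f2 [set y])%N ->
  f2 setT = 0 ->
  bdec_width_le f2 k -> bdec_width_le f1 k.
Proof.
move=> surj Hpre Hsym Hcl fT bd.
have single := bdec_single fT bd.
have surj' : forall y, exists x, pi x == y by move=> y; case: (surj y) => x <-; exists x.
pose sec y := xchoose (surj' y).
have secK : forall y, pi (sec y) = y by move=> y; apply/eqP; exact: (xchooseP (surj' y)).
have secI : injective sec by move=> y1 y2 E; rewrite -(secK y1) E secK.
pose rep x := sec (pi x).
pose R := [set sec y | y in E2].
have Hrep : forall x, rep x \in R by move=> x; apply: imset_f.
have Hrepid : forall x, x \in R -> rep x = x.
  by move=> x /imsetP [y _ ->]; rewrite /rep secK.
have Hcls : forall r (X : {set E1}), X \subset [set y | rep y == r] ->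
    (f1 X <= k)%N /\ (f1 (~: X) <= k)%N.
  move=> r X sub.
  have sub' : X \subset pi @^-1: [set pi r].
    apply/subsetP => y /(subsetP sub); rewrite !inE => /eqP <-.
    by rewrite /rep secK.
  have := leq_trans (Hcl _ _ sub') (single _).
  by rewrite Hsym.
case: bd => n [t [tauD [tr dg inj cov wd]]].
apply: (@grow E1 f1 k rep R Hrep Hrepid Hcls R n t (fun v => sec (tauD v))) => //.
split => //.
- by move=> u v lu lv /secI; apply: inj.
- by move=> v _; apply: imset_f.
- move=> s /imsetP [y _ ->]; case: (cov y) => v lv <-; by exists v.
- move=> a b tab; apply: leq_trans (wd a b tab); apply: leq_trans (Hpre _).
  apply: eq_leq; congr f1; apply/setP => y; rewrite !inE.
  have -> : rho rep R y = rep y by rewrite /rho; case: ifP => // /Hrepid.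
  by rewrite /rep (imset_comp sec tauD) (mem_imset _ _ secI).
Qed.

Local Open Scope fset_scope.

Lemma src_nohead (H : digraph) z e : is_source H z -> e \in de H -> e.2 != z.
Proof.
case/andP => _ /existsPn N eH; apply/negP => /eqP E.
by have := N [` eH]; rewrite /= E eqxx.
Qed.

Lemma snk_notail (H : digraph) z e : is_sink H z -> e \in de H -> e.1 != z.
Proof.
case/andP => _ /existsPn N eH; apply/negP => /eqP E.
by have := N [` eH]; rewrite /= E eqxx.
Qed.

Lemma ident_cases (H : digraph) x y :
  identifiable H x y ->
  (forall e, e \in de H -> (e.2 != x) && (e.2 != y)) \/
  (forall e, e \in de H -> (e.1 != x) && (e.1 != y)).
Proof.
case/and4P => _ _ _ /orP [/andP [sx sy]|/andP [sx sy]].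
  by left => e eH; rewrite (src_nohead sx eH) (src_nohead sy eH).
by right => e eH; rewrite (snk_notail sx eH) (snk_notail sy eH).
Qed.

Lemma ident_map_eq (H : digraph) x y g u v :
  g \notin (dv H `\ x `\ y) -> u \in dv H -> v \in dv H ->
  ident_map x y g u = ident_map x y g v ->
  u = v \/ (((u == x) || (u == y)) && ((v == x) || (v == y))).
Proof.
move=> fr uH vH; rewrite /ident_map.
case: ifP => hu; case: ifP => hv; rewrite ?hu ?hv; try by right.
- move=> E; subst v; move: fr; rewrite !inE vH.
  by move: hv => /negbT; rewrite negb_or => /andP [-> ->].
- move=> E; subst u; move: fr; rewrite !inE uH.
  by move: hu => /negbT; rewrite negb_or => /andP [-> ->].
- by left.
Qed.

Lemma obtained_psi H D' : obtained H D' -> wf_digraph H ->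
  wf_digraph D' /\ exists psi : nat -> nat,
    de D' = [fset (psi e.1, psi e.2) | e in de H] /\
    (forall e1 e2, e1 \in de H -> e2 \in de H -> psi e1.2 = psi e2.1 -> e1.2 = e2.1).
Proof.
elim=> {H D'} [D|H x y g D idf fr _ IH] wfH.
  split => //; exists id; split; last by move=> e1 e2 _ _.
  apply/fsetP => z; apply/idP/imfsetP => [zD|[e eD ->]]; last by case: e eD.
  by exists z => //; case: z zD.
set phi := ident_map x y g.
have cs := ident_cases idf.
have phiE : forall u v, u \in dv H -> v \in dv H -> phi u = phi v ->
    u = v \/ (((u == x) || (u == y)) && ((v == x) || (v == y))).
  by move=> u v; apply: ident_map_eq.
have wf1 : wf_digraph (identify H x y g).
  move=> e1 /imfsetP [e eH ->] /=.
  have [e1H e2H ne] := wfH e eH.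
  have inV : forall v, v \in dv H -> phi v \in g |` (dv H `\ x `\ y).
    move=> v vH; rewrite /phi /ident_map; case: ifP => h; rewrite !inE ?eqxx //.
    by move: h => /negbT; rewrite negb_or => /andP [-> ->]; rewrite vH orbT.
  split; [exact: inV | exact: inV |].
  apply/negP => /eqP /(phiE _ _ e1H e2H) [E|]; first by rewrite E eqxx in ne.
  case: cs => /(_ e eH) /andP [h1 h2] /andP [a b].
    by move: b; rewrite (negbTE h1) (negbTE h2).
  by move: a; rewrite (negbTE h1) (negbTE h2).
have [wfD [psi1 [ED P1]]] := IH wf1.
split => //; exists (fun v => psi1 (phi v)); split.
  rewrite ED; apply/fsetP => z; apply/imfsetP/imfsetP.
    by case=> e1 /imfsetP [e eH ->] ->; exists e.
  case=> e eH ->; exists (phi e.1, phi e.2) => //.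
  by apply/imfsetP; exists e.
move=> e1 e2 e1H e2H E.
have i1 : (phi e1.1, phi e1.2) \in de (identify H x y g) by apply/imfsetP; exists e1.
have i2 : (phi e2.1, phi e2.2) \in de (identify H x y g) by apply/imfsetP; exists e2.
have := P1 _ _ i1 i2 E => /= E'.
have [a1 a2 _] := wfH e1 e1H; have [b1 b2 _] := wfH e2 e2H.
case: (phiE _ _ a2 b1 E') => // /andP [h1 h2].
case: cs => [/(_ e1 e1H)|/(_ e2 e2H)] /andP [c1 c2].
  by move: h1; rewrite (negbTE c1) (negbTE c2).
by move: h2; rewrite (negbTE c1) (negbTE c2).
Qed.

Section Orders.
Variables (H D : digraph) (psi : nat -> nat).
Hypotheses (wfH : wf_digraph H) (wfD : wf_digraph D).
Hypothesis deg1 : forall v, is_source H v || is_sink H v -> degree H v = 1%N.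
Hypothesis ED : de D = [fset (psi e.1, psi e.2) | e in de H].
Hypothesis P1 : forall e1 e2, e1 \in de H -> e2 \in de H -> psi e1.2 = psi e2.1 -> e1.2 = e2.1.

Lemma pim (e : de H) : (psi (val e).1, psi (val e).2) \in de D.
Proof. by rewrite ED; apply/imfsetP; exists (val e) => //; apply: valP. Qed.

Definition pi (e : de H) : de D := [` pim e].

Lemma val_pi e : val (pi e) = (psi (val e).1, psi (val e).2).
Proof. by []. Qed.

Lemma pi_surj (d : de D) : exists e, pi e = d.
Proof.
have := valP d; rewrite [X in _ \in X]ED => /imfsetP [e eH Ed].
by exists [` eH]; apply: val_inj; rewrite val_pi Ed.
Qed.

Definition internal v := [exists i : de H, (val i).2 == v] && [exists o : de H, (val o).1 == v].

Lemma two_internal v (e e' : de H) : v \in dv H -> e != e' ->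
  incident v e -> incident v e' -> internal v.
Proof.
move=> vH ne ie ie'.
have dg : (2 <= degree H v)%N.
  have <- : #|` [fset val e; val e']| = 2 by rewrite cardfs2 (inj_eq val_inj) ne.
  rewrite /degree; apply: fsubset_leq_card; apply/fsubsetP => z; rewrite !inE => /orP [] /eqP ->.
    by rewrite (valP e) /=; rewrite /incident in ie.
  by rewrite (valP e') /=; rewrite /incident in ie'.
have : ~~ (is_source H v || is_sink H v).
  by apply/negP => /deg1 d1; rewrite d1 in dg.
rewrite negb_or /is_source /is_sink vH /= !negbK.
by [].
Qed.

Lemma noloop (d : de D) : (val d).1 != (val d).2.
Proof. by have [_ _] := wfD (valP d). Qed.

Lemma inc_rep (e x : de H) v : internal v -> pi x = pi e -> incident v e -> incident v x.
Proof.
case/andP => /existsP [i /eqP iv] /existsP [o /eqP ov] E.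
have /pair_equal_spec [E1 E2] : val (pi x) = val (pi e) by rewrite E.
rewrite /incident => /orP [] /eqP ev.
  apply/orP; left; apply/eqP.
  have : psi (val i).2 = psi (val x).1 by rewrite E1 ev iv.
  by move/(P1 (valP i) (valP x)) => <-.
apply/orP; right; apply/eqP.
have : psi (val x).2 = psi (val o).1 by rewrite E2 ev ov.
by move/(P1 (valP x) (valP o)) ->.
Qed.

Definition cnt (X : {set de H}) : {fset nat} :=
  [fset v in dv H | [exists e in X, incident v e] && [exists e in ~: X, incident v e]].

Lemma cntP (X : {set de H}) v : reflect
  (v \in dv H /\ exists e e', [/\ e \in X, e' \notin X, incident v e & incident v e'])
  (v \in cnt X).
Proof.
rewrite /cnt !inE /=; apply: (iffP idP).
  case/andP => vH /andP [/existsP [e /andP [eX ie]] /existsP [e' /andP [e'X ie']]].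
  by split => //; exists e, e'; rewrite inE in e'X.
case=> vH [e [e' [eX e'X ie ie']]]; rewrite vH /=; apply/andP; split.
  by apply/existsP; exists e; rewrite eX.
by apply/existsP; exists e'; rewrite inE e'X.
Qed.

Lemma cnt_internal (X : {set de H}) v : v \in cnt X -> internal v.
Proof.
case/cntP => vH [e [e' [eX e'X ie ie']]]; apply: (two_internal vH _ ie ie').
by apply: contraNneq e'X => <-.
Qed.

Lemma u_order_sym (X : {set de H}) : u_order (~: X) = u_order X.
Proof.
rewrite /u_order; congr (#|` _|); apply/fsetP => v; rewrite !inE setCK.
by rewrite [X in _ && X]andbC.
Qed.

Lemma d_order_T : @d_order D setT = 0%N.
Proof.
rewrite /d_order; apply/eqP; rewrite cardfs_eq0; apply/eqP/fsetP => v.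
rewrite !inE; apply/negP => /orP [] /andP [_ /andP [/existsP [e] ] ]; rewrite !inE //.
by move=> _ /existsP [e']; rewrite !inE.
Qed.

Lemma SVP (Z : {set de D}) w : reflect
  (w \in dv D /\ exists d1 d2, [/\ d1 \notin Z, d2 \in Z, (val d1).2 = w & (val d2).1 = w])
  (w \in SV Z).
Proof.
rewrite /SV !inE /=; apply: (iffP idP).
  case/andP => wD /andP [/existsP [d1 /andP [d1Z /eqP h1]] /existsP [d2 /andP [d2Z /eqP h2]]].
  by split => //; exists d1, d2; rewrite inE in d1Z.
case=> wD [d1 [d2 [d1Z d2Z h1 h2]]]; rewrite wD /=; apply/andP; split.
  by apply/existsP; exists d1; rewrite inE d1Z h1 eqxx.
by apply/existsP; exists d2; rewrite d2Z h2 eqxx.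
Qed.

Lemma psi_inj_cnt (X : {set de H}) : {in cnt X &, injective psi}.
Proof.
move=> v v' /cnt_internal /andP [/existsP [i /eqP iv] _].
move=> /cnt_internal /andP [_ /existsP [o /eqP ov]] E.
by rewrite -iv -ov; apply: P1 (valP i) (valP o) _; rewrite iv ov.
Qed.

Lemma ordr1 (Y : {set de D}) : d_order Y = u_order (pi @^-1: Y).
Proof.
set X := pi @^-1: Y.
rewrite /d_order; suff -> : SV Y `|` SV (~: Y) = psi @` cnt X.
  by rewrite (eqP (introT (card_in_imfsetP _ _) (@psi_inj_cnt X))).
apply/fsetP => w; apply/idP/idP.
  rewrite in_fsetU => /orP [] /SVP [wD [d1 [d2 [d1n d2i h1 h2]]]];
  have [e1 E1] := pi_surj d1; have [e2 E2] := pi_surj d2; subst d1 d2;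
  rewrite val_pi /= in h1 h2;
  have E12 : (val e1).2 = (val e2).1 by apply: P1 (valP e1) (valP e2) _; rewrite h1 h2.
  - have [_ vH _] := wfH (valP e1).
    apply/imfsetP; exists (val e1).2; last by [].
    apply/cntP; split => //; exists e2, e1; split.
    + by rewrite inE.
    + by rewrite inE.
    + by rewrite /incident -E12 eqxx.
    + by rewrite /incident eqxx orbT.
  - have [_ vH _] := wfH (valP e1).
    apply/imfsetP; exists (val e1).2; last by [].
    rewrite inE negbK in d1n; rewrite inE in d2i.
    apply/cntP; split => //; exists e1, e2; split.
    + by rewrite inE.
    + by rewrite inE.
    + by rewrite /incident eqxx orbT.
    + by rewrite /incident -E12 eqxx.
case/imfsetP => v vin ->.
have [vH [e [e' [eX e'X ie ie']]]] := cntP _ _ vin.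
have /andP [/existsP [i /eqP iv] /existsP [o /eqP ov]] := cnt_internal vin.
have [i' [o' [i'v o'v diff]]] : exists i' o' : de H,
    [/\ (val i').2 = v, (val o').1 = v & (i' \in X) != (o' \in X)].
  case: (boolP ((i \in X) != (o \in X))) => [d|]; first by exists i, o.
  rewrite negbK => /eqP Eio.
  case: (boolP (i \in X)) => iX.
    case/orP: ie' => /eqP h.
      by exists i, e'; split => //; rewrite iX (negbTE e'X).
    by exists e', o; split => //; rewrite -Eio iX (negbTE e'X).
  case/orP: ie => /eqP h.
    by exists i, e; split => //; rewrite eX (negbTE iX).
  by exists e, o; split => //; rewrite -Eio eX (negbTE iX).
have wD : psi v \in dv D by have [_ h _] := wfD (valP (pi i')); rewrite val_pi /= i'v in h.
rewrite in_fsetU; apply/orP.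
case: (boolP (i' \in X)) diff => i'X /=; rewrite ?negbK => o'X.
  right; apply/SVP; split => //; exists (pi i'), (pi o'); split.
  + by rewrite !inE negbK; rewrite inE in i'X.
  + by rewrite inE; rewrite inE in o'X.
  + by rewrite val_pi /= i'v.
  + by rewrite val_pi /= o'v.
left; apply/SVP; split => //; exists (pi i'), (pi o'); split.
+ by rewrite inE in i'X.
+ by rewrite inE in o'X.
+ by rewrite val_pi /= i'v.
+ by rewrite val_pi /= o'v.
Qed.

Lemma ordr2 (R : {set de H}) : (forall d, exists2 r, r \in R & pi r = d) ->
  forall X, (d_order (pi @: (X :&: R)) <= u_order X)%N.
Proof.
move=> cov X; rewrite ordr1.
set Z := pi @^-1: (pi @: (X :&: R)).
change (#|` cnt Z| <= #|` cnt X|)%N; apply: fsubset_leq_card; apply/fsubsetP => v vin.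
have [vH [e [e' [eZ e'Z ie ie']]]] := cntP _ _ vin.
have intv := cnt_internal vin.
move: eZ; rewrite inE => /imsetP [x]; rewrite inE => /andP [xX xR] Ex.
case: (cov (pi e')) => r' r'R Er'.
apply/cntP; split => //; exists x, r'; split => //.
- apply: contra e'Z => r'X; rewrite inE -Er'; apply: imset_f; by rewrite inE r'X.
- exact: inc_rep intv (esym Ex) ie.
- exact: inc_rep intv Er' ie'.
Qed.

Lemma ordr3 y (X : {set de H}) : X \subset pi @^-1: [set y] ->
  (u_order X <= d_order [set y])%N.
Proof.
move=> sub; rewrite ordr1.
change (#|` cnt X| <= #|` cnt (pi @^-1: [set y])|)%N; apply: fsubset_leq_card.
apply/fsubsetP => v vin.
have [vH [e [e' [eX e'X ie ie']]]] := cntP _ _ vin.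
have /andP [/existsP [i /eqP iv] /existsP [o /eqP ov]] := cnt_internal vin.
have ey : pi e = y by move: (subsetP sub e eX); rewrite !inE => /eqP.
have nl := noloop (pi e); rewrite val_pi /= in nl.
apply/cntP; split => //.
case/orP: ie => /eqP h.
  exists e, i; split; [by rewrite inE inE ey| |by rewrite /incident h eqxx|by rewrite /incident iv eqxx orbT].
  rewrite !inE -ey; apply/negP => /eqP E.
  have /pair_equal_spec [_ E2] : val (pi i) = val (pi e) by rewrite E.
  by move: nl; rewrite h -E2 iv -h eqxx.
exists e, o; split; [by rewrite inE inE ey| |by rewrite /incident h eqxx orbT|by rewrite /incident ov eqxx].
rewrite !inE -ey; apply/negP => /eqP E.
have /pair_equal_spec [E1 _] : val (pi o) = val (pi e) by rewrite E.
by move: nl; rewrite h -E1 ov eqxx.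
Qed.
End Orders.

Lemma ex_min_nat (P : nat -> Prop) : (exists k, P k) ->
  exists k, P k /\ forall k', P k' -> (k <= k')%N.
Proof.
case=> n Pn; elim: n {-2}n (leqnn n) Pn => [|n IH] m lem Pm.
  exists m; split => // k' _; by move: lem; rewrite leqn0 => /eqP ->.
case: (classic (exists k', P k' /\ (k' < m)%N)) => [[k' [Pk' lt]]|N].
  by apply: (IH k') => //; rewrite -ltnS; apply: leq_trans lt lem.
exists m; split => // k' Pk'; rewrite leqNgt; apply/negP => lt.
by apply: N; exists k'.
Qed.

Theorem mainTheorem11 (D H : digraph) :
  wf_digraph D -> wf_digraph H -> ss_split H D ->
  exists k : nat, bw_u H k /\ dbw D k.
Proof.
move=> wfD wfH [deg1 [D' [ob [f [finj fV fE]]]]].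
have [wfD' [psi1 [ED' P1']]] := obtained_psi ob wfH.
pose psi v := f (psi1 v).
have ED : de D = [fset (psi e.1, psi e.2) | e in de H].
  rewrite -fE ED'; apply/fsetP => z; apply/imfsetP/imfsetP.
    by case=> d /imfsetP [e eH ->] ->; exists e.
  case=> e eH ->; exists (psi1 e.1, psi1 e.2) => //.
  by apply/imfsetP; exists e.
have P1 : forall e1 e2, e1 \in de H -> e2 \in de H -> psi e1.2 = psi e2.1 -> e1.2 = e2.1.
  move=> e1 e2 e1H e2H E; apply: P1' => //.
  have i1 : (psi1 e1.1, psi1 e1.2) \in de D' by rewrite ED'; apply/imfsetP; exists e1.
  have i2 : (psi1 e2.1, psi1 e2.2) \in de D' by rewrite ED'; apply/imfsetP; exists e2.
  have [_ a _] := wfD' _ i1; have [b _ _] := wfD' _ i2.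
  exact: finj a b E.
pose p := pi ED.
have surj := pi_surj ED.
have equiv : forall k, bdec_width_le (@u_order H) k <-> bdec_width_le (@d_order D) k.
  move=> k; split.
    have surj' : forall d, exists e, p e == d by move=> d; case: (surj d) => e <-; exists e.
    pose sec d := xchoose (surj' d).
    have secK : forall d, p (sec d) = d by move=> d; apply/eqP; exact: (xchooseP (surj' d)).
    apply: (@transfer_b _ _ _ _ p [set sec d | d : de D]).
    - by move=> x y /imsetP [d1 _ ->] /imsetP [d2 _ ->]; rewrite !secK => ->.
    - by move=> d; exists (sec d); rewrite ?imset_f ?secK.
    - apply: (ordr2 wfH wfD deg1 P1) => d; exists (sec d); rewrite ?imset_f ?secK //.
  apply: (@transfer_a _ _ _ _ p) => //.
  - by move=> Y; rewrite (ordr1 wfH wfD deg1 ED P1).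
  - exact: u_order_sym.
  - by move=> y X; apply: (ordr3 wfH wfD deg1 P1).
  - exact: d_order_T.
have [k [bk mink]] := ex_min_nat (bdec_exists (@u_order H)).
exists k; split; split => //.
- by apply/equiv.
- by move=> k' /equiv; apply: mink.
Qed.
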